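(* For every $\mu\in\overline{\mathbb R}$, the subspace $A_{[\mu]}$ is a subalgebra of $A_\mu$. Further, $\Delta_\mu(A_{[\mu]})\subset A_{[\mu]}\otimes A_{[\mu]}$, and $A_{[\mu]}$ becomes a bialgebra when endowed with the coproduct $\Delta_\mu$.
   Context: Let $\Gamma$ be a discrete submonoid of $\{(r,d)\in\mathbb R^2: r>0\text{ or }(r=0\text{ and }d\ge0)\}$ and $A=\bigoplus_{\gamma\in\Gamma}A^\gamma$ a connected ($A^0=k$) $\Gamma$-graded bialgebra over a field $k$, coproduct $\Delta$. Write $|a|=\gamma$ for $a\in A^\gamma$. For homogeneous $a$, $L(a)$ (resp. $R(a)$) is the set of $\beta$ (resp. $\gamma$) such that $\Delta(a)$ has a nonzero component in $A^\beta\otimes A^\gamma$. Let $\overline{\mathbb R}=\mathbb R\cup\{\infty\}$ with $\infty$ larger than all reals; $\Gamma_\infty=\{(r,d)\in\Gamma:r=0\}$, $\Gamma_\mu=\{(r,d)\in\Gamma: d=\mu r\}$ for real $\mu$, $\Gamma_{\le\mu}=\bigcup_{\nu\le\mu}\Gamma_\nu$, $\Gamma_{\ge\mu}=\bigcup_{\nu\ge\mu}\Gamma_\nu$. A homogeneous $a$ is of slope $\mu$ if $|a|\in\Gamma_\mu$, and semistable of slope $\mu$ if moreover $L(a)\subset\Gamma_{\le\mu}$ (equivalently $R(a)\subset\Gamma_{\ge\mu}$). $A_\mu$ (resp. $A_{[\mu]}$) is the span of the homogeneous elements of slope $\mu$ (resp. semistable of slope $\mu$). $p_\mu:A\to A_\mu$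 is the projection along $\bigoplus_{\gamma\notin\Gamma_\mu}A^\gamma$ and $\Delta_\mu=(p_\mu\otimes p_\mu)\circ\Delta$. *)

(* Defs.v *)
From HB Require Import structures.
From mathcomp Require Import all_boot all_order all_algebra.
From mathcomp Require Import reals.
Set Implicit Arguments. Unset Strict Implicit. Unset Printing Implicit Defensive.
Import Order.TTheory GRing.Theory Num.Theory.
Local Open Scope ring_scope.

Section Defs.
Variables (R : realType) (k : fieldType) (A : algType k).

Notation deg := (R * R)%type.
Definition dadd (g h : deg) : deg := (g.1 + h.1, g.2 + h.2).

Definition lin (f : A -> k) := forall c x y, f (c *: x + y) = c * f x + f y.

(* An element of A (x) A (resp. A (x) A (x) A) is represented by a formal
   finite sum of pure tensors; two formal sums denote the same tensor iff
   they agree against all pairs (triples) of linear functionals (over a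
   field the map U (x) V -> Bil(dual U, dual V) is injective). *)
Definition teq2 (t t' : seq (A * A)) :=
  forall f g, lin f -> lin g ->
    \sum_(x <- t) f x.1 * g x.2 = \sum_(x <- t') f x.1 * g x.2.
Definition teq3 (t t' : seq (A * A * A)) :=
  forall f g h, lin f -> lin g -> lin h ->
    \sum_(x <- t) f x.1.1 * g x.1.2 * h x.2 =
    \sum_(x <- t') f x.1.1 * g x.1.2 * h x.2.

Definition tscale (c : k) (t : seq (A * A)) := [seq (c *: x.1, x.2) | x <- t].
Definition tmul (t t' : seq (A * A)) :=
  [seq (x.1 * y.1, x.2 * y.2) | x <- t, y <- t'].
Definition tmap2 (f g : A -> A) (t : seq (A * A)) := [seq (f x.1, g x.2) | x <- t].
Definition comul_l (D : A -> seq (A * A)) (t : seq (A * A)) : seq (A * A * A) :=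
  flatten [seq [seq (y.1, y.2, x.2) | y <- D x.1] | x <- t].
Definition comul_r (D : A -> seq (A * A)) (t : seq (A * A)) : seq (A * A * A) :=
  flatten [seq [seq (x.1, y.1, y.2) | y <- D x.2] | x <- t].
Definition in_tensor (P : A -> Prop) (t : seq (A * A)) :=
  exists t', (forall x, x \in t' -> P x.1 /\ P x.2) /\ teq2 t t'.

(* (P, D, eps) is a bialgebra (P a subspace containing 1, closed under product) *)
Definition bialg_on (P : A -> Prop) (D : A -> seq (A * A)) (eps : A -> k) :=
  [/\ (forall c a b, P a -> P b -> teq2 (D (c *: a + b)) (tscale c (D a) ++ D b)),
      (forall a, P a -> teq3 (comul_l D (D a)) (comul_r D (D a))),
      (forall a, P a -> \sum_(y <- D a) eps y.1 *: y.2 = a /\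
                        \sum_(y <- D a) eps y.2 *: y.1 = a),
      (forall a b, P a -> P b -> teq2 (D (a * b)) (tmul (D a) (D b))) /\
        teq2 (D 1) [:: (1, 1)]
    & (forall c a b, P a -> P b -> eps (c *: a + b) = c * eps a + eps b) /\
      (forall a b, P a -> P b -> eps (a * b) = eps a * eps b) /\ eps 1 = 1].

(* The grading A = (+)_{g in Gam} A^g is given by the projections pi g onto
   A^g, with a (finite) list supp a containing every degree g with
   pi g a <> 0. *)
Definition homog (pi : deg -> A -> A) (g : deg) (a : A) := pi g a = a.

Definition discrete_monoid (Gam : deg -> Prop) :=
  [/\ Gam (0, 0), (forall g h, Gam g -> Gam h -> Gam (dadd g h)),
      (forall g, Gam g -> 0 < g.1 \/ (g.1 = 0 /\ 0 <= g.2))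
    & (forall g, Gam g -> exists2 e : R, 0 < e &
         forall h, Gam h -> `|h.1 - g.1| < e -> `|h.2 - g.2| < e -> h = g)].

Definition grading (Gam : deg -> Prop) (pi : deg -> A -> A) (supp : A -> seq deg) :=
  [/\ (forall g c x y, pi g (c *: x + y) = c *: pi g x + pi g y),
      (forall g x, pi g (pi g x) = pi g x),
      (forall g h x, g != h -> pi g (pi h x) = 0),
      (forall g x, pi g x != 0 -> Gam g /\ g \in supp x)
    & (forall x, x = \sum_(g <- undup (supp x)) pi g x)].

Definition graded_conn_bialg (Gam : deg -> Prop) (pi : deg -> A -> A)
    (supp : A -> seq deg) (D : A -> seq (A * A)) (eps : A -> k) :=
  [/\ discrete_monoid Gam, grading Gam pi supp,
      (forall g h x y, homog pi g x -> homog pi h y -> homog pi (dadd g h) (x * y))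
        /\ homog pi (0, 0) 1,
      (forall x, homog pi (0, 0) x -> exists c : k, x = c%:A)
    & bialg_on (fun _ => True) D eps /\
      (forall g x b b', homog pi g x -> dadd b b' != g ->
          teq2 (tmap2 (pi b) (pi b') (D x)) [::]) /\
      (forall g x, homog pi g x -> g != (0, 0) -> eps x = 0)].

(* slopes mu in R U {oo}: None stands for oo *)
Definition in_slope (mu : option R) (g : deg) : bool :=
  if mu is Some m then g.2 == m * g.1 else g.1 == 0.
Definition ext_le (nu mu : option R) : bool :=
  match nu, mu with
  | _, None => true
  | None, Some _ => false
  | Some a, Some b => a <= b
  end.
Definition Gam_le (Gam : deg -> Prop) (mu : option R) (g : deg) :=
  exists nu, ext_le nu mu /\ Gam g /\ in_slope nu g.

Definition Lset (pi : deg -> A -> A) (D : A -> seq (A * A)) (a : A) (b : deg) :=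
  exists g, ~ teq2 (tmap2 (pi b) (pi g) (D a)) [::].

Definition of_slope Gam pi (mu : option R) (a : A) :=
  exists g, homog pi g a /\ Gam g /\ in_slope mu g.
Definition semistable Gam pi D (mu : option R) (a : A) :=
  exists g, [/\ homog pi g a, Gam g, in_slope mu g &
                forall b, Lset pi D a b -> Gam_le Gam mu b].

Definition span (P : A -> Prop) (x : A) :=
  exists s : seq (k * A), (forall y, y \in s -> P y.2) /\
                          x = \sum_(y <- s) y.1 *: y.2.

Definition A_sl Gam pi mu := span (of_slope Gam pi mu).
Definition A_ss Gam pi D mu := span (semistable Gam pi D mu).

Definition p_mu (pi : deg -> A -> A) (supp : A -> seq deg) (mu : option R) (a : A) :=
  \sum_(g <- undup (supp a) | in_slope mu g) pi g a.
Definition Delta_mu pi supp (D : A -> seq (A * A)) mu (a : A) :=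
  tmap2 (p_mu pi supp mu) (p_mu pi supp mu) (D a).

End Defs.

(* Main.v *)
Require Import Defs.
From HB Require Import structures.
From mathcomp Require Import all_boot all_order all_algebra.
From mathcomp Require Import reals.
From mathcomp Require Import boolp classical_sets ring lra zify.
Import Order.TTheory GRing.Theory Num.Theory.
Local Open Scope ring_scope.
Set Implicit Arguments. Unset Strict Implicit.


Section Gen.
Variables (k : fieldType) (A : algType k).

Lemma lin0 (f : A -> k) : lin f -> f 0 = 0.
Proof.
move=> hf; have := hf 1 0 0; rewrite scale1r addr0 mul1r => h.
by have := congr1 (fun x => x - f 0) h; rewrite addrK subrr.
Qed.
Lemma linD (f : A -> k) : lin f -> forall x y, f (x + y) = f x + f y.
Proof. by move=> hf x y; have := hf 1 x y; rewrite scale1r mul1r. Qed.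
Lemma linZ (f : A -> k) : lin f -> forall c x, f (c *: x) = c * f x.
Proof. by move=> hf c x; have := hf c x 0; rewrite (lin0 hf) !addr0. Qed.
Lemma lin_sum (f : A -> k) : lin f -> forall I (r : seq I) (P : pred I) F,
  f (\sum_(i <- r | P i) F i) = \sum_(i <- r | P i) f (F i).
Proof. by move=> hf I r P F; apply: (big_morph f (linD hf) (lin0 hf)). Qed.
Lemma linN (f : A -> k) : lin f -> forall x, f (- x) = - f x.
Proof. by move=> hf x; rewrite -scaleN1r linZ // mulN1r. Qed.

Definition linA (F : A -> A) := forall c x y, F (c *: x + y) = c *: F x + F y.
Lemma linA0 F : linA F -> F 0 = 0.
Proof.
move=> hf; have := hf 1 0 0; rewrite !scale1r addr0 => h.
by have := congr1 (fun x => x - F 0) h; rewrite addrK subrr.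
Qed.
Lemma linAD F : linA F -> forall x y, F (x + y) = F x + F y.
Proof. by move=> hf x y; have := hf 1 x y; rewrite !scale1r. Qed.
Lemma linAZ F : linA F -> forall c x, F (c *: x) = c *: F x.
Proof. by move=> hf c x; have := hf c x 0; rewrite (linA0 hf) !addr0. Qed.
Lemma linA_sum F : linA F -> forall I (r : seq I) (P : pred I) G,
  F (\sum_(i <- r | P i) G i) = \sum_(i <- r | P i) F (G i).
Proof. by move=> hf I r P G; apply: (big_morph F (linAD hf) (linA0 hf)). Qed.
Lemma lin_comp (f : A -> k) (F : A -> A) : lin f -> linA F -> lin (fun x => f (F x)).
Proof. by move=> hf hF c x y; rewrite hF hf. Qed.
Lemma lin_mulr (f : A -> k) (z : A) : lin f -> lin (fun x => f (x * z)).
Proof. by move=> hf c x y; rewrite mulrDl -scalerAl hf. Qed.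
Lemma lin_mull (f : A -> k) (z : A) : lin f -> lin (fun x => f (z * x)).
Proof. by move=> hf c x y; rewrite mulrDr -scalerAr hf. Qed.

Definition ev2 (f g : A -> k) (t : seq (A * A)) := \sum_(x <- t) f x.1 * g x.2.

Lemma ev2_cat f g t1 t2 : ev2 f g (t1 ++ t2) = ev2 f g t1 + ev2 f g t2.
Proof. by rewrite /ev2 big_cat. Qed.
Lemma ev2_tmap2 f g F G t : ev2 f g (tmap2 F G t) = ev2 (fun x => f (F x)) (fun x => g (G x)) t.
Proof. by rewrite /ev2 /tmap2 big_map. Qed.
Lemma ev2_tscale f g c t : lin f -> ev2 f g (tscale c t) = c * ev2 f g t.
Proof.
move=> hf; rewrite /ev2 /tscale big_map mulr_sumr; apply: eq_bigr => x _ /=.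
by rewrite linZ // mulrA.
Qed.
Lemma ev2_nil f g : ev2 f g [::] = 0.
Proof. by rewrite /ev2 big_nil. Qed.

Lemma big_uniq_supp (T : eqType) (V : nmodType) (S U : seq T) (F : T -> V) :
  uniq S -> uniq U -> (forall g, F g != 0 -> g \in S) -> (forall g, F g != 0 -> g \in U) ->
  \sum_(g <- S) F g = \sum_(g <- U) F g.
Proof.
move=> uS uU hS hU.
have -> : \sum_(g <- S) F g = \sum_(g <- S | g \in U) F g.
  rewrite [RHS]big_mkcond; apply: eq_bigr => g _; case: ifP => // gU.
  by apply/eqP; apply: contraFT gU => /hU.
have -> : \sum_(g <- U) F g = \sum_(g <- U | g \in S) F g.
  rewrite [RHS]big_mkcond; apply: eq_bigr => g _; case: ifP => // gU.
  by apply/eqP; apply: contraFT gU => /hS.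
rewrite -[LHS]big_filter -[RHS]big_filter; apply: perm_big; apply: uniq_perm; rewrite ?filter_uniq //.
by move=> x; rewrite !mem_filter andbC.
Qed.

Lemma big_single (T : eqType) (V : nmodType) (S : seq T) (F : T -> V) g0 :
  uniq S -> (forall g, F g != 0 -> g \in S) -> (forall g, g != g0 -> F g = 0) ->
  \sum_(g <- S) F g = F g0.
Proof.
move=> uS hS h0; rewrite (@big_uniq_supp _ _ S [:: g0]) ?big_seq1 //.
by move=> g; apply: contraR; rewrite inE => /h0 ->.
Qed.

Lemma sum_exchange (V : nmodType) (I J : Type) (r1 : seq I) (r2 : seq J) (F : I -> J -> V) :
  \sum_(i <- r1) \sum_(j <- r2) F i j = \sum_(j <- r2) \sum_(i <- r1) F i j.
Proof. exact: exchange_big. Qed.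

End Gen.


Section LinAlg.
Variables (k : fieldType) (A : algType k).

Lemma sep (n : nat) (u : nat -> A) (v : A) :
  ~ (exists c : nat -> k, v = \sum_(l <- iota 0 n) c l *: u l) ->
  exists phi : A -> k, [/\ lin phi, forall l, (l < n)%N -> phi (u l) = 0 & phi v = 1].
Proof.
move=> nv.
pose PG (G : set (A * k)) := [/\ G (0, 0),
  (forall c x a y b, G (x, a) -> G (y, b) -> G (c *: x + y, c * a + b)),
  (forall x a b, G (x, a) -> G (x, b) -> a = b), G (v, 1) &
  (forall l, (l < n)%N -> G (u l, 0))].
pose P' (G : set (A * k)) := PG G \/ G = set0.
pose G0 : set (A * k) := fun z => exists (c : nat -> k) (d : k),
   z = (\sum_(l <- iota 0 n) c l *: u l + d *: v, d).
have hG0 : PG G0.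
  split.
  - exists (fun _ => 0), 0; congr pair; rewrite scale0r addr0 big1 // => l _; exact: scale0r.
  - move=> c0 x a y b [c1 [d1 E1]] [c2 [d2 E2]]; case: E1 => -> ->; case: E2 => -> ->.
    exists (fun l => c0 * c1 l + c2 l), (c0 * d1 + d2); congr pair.
    rewrite scalerDr scaler_sumr addrACA -big_split /=; congr (_ + _).
      by apply: eq_bigr => l _; rewrite scalerA scalerDl.
    by rewrite scalerA scalerDl.
  - move=> x a b [c1 [d1 E1]] [c2 [d2 E2]]; case: E1 => Ex ->; case: E2 => Ex' ->.
    case: (eqVneq d1 d2) => // ne; exfalso; apply: nv.
    exists (fun l => (d1 - d2)^-1 * (c2 l - c1 l)).
    set X := \sum_(l <- iota 0 n) c1 l *: u l; set Y := \sum_(l <- iota 0 n) c2 l *: u l.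
    have H : X + d1 *: v = Y + d2 *: v by rewrite -Ex -Ex'.
    have E : (d1 - d2) *: v = Y - X.
      rewrite scalerBl (_ : d1 *: v = Y + d2 *: v - X); last by rewrite -H addrC addKr.
      by rewrite addrAC addrK.
    have nz : d1 - d2 != 0 by rewrite subr_eq0.
    transitivity ((d1 - d2)^-1 *: ((d1 - d2) *: v)); first by rewrite scalerA mulVf // scale1r.
    rewrite E /X /Y -sumrB scaler_sumr; apply: eq_bigr => l _.
    by rewrite -scalerBl scalerA.
  - exists (fun _ => 0), 1; congr pair; rewrite scale1r big1 ?add0r // => l _; exact: scale0r.
  - move=> l hl; exists (fun l' => if l' == l then 1 else 0), 0; congr pair.
    rewrite scale0r addr0 (bigD1_seq l) ?iota_uniq ?mem_iota //= eqxx scale1r.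
    rewrite big1 ?addr0 // => l' /negbTE ->; exact: scale0r.
have [M [PM maxM]] : exists M, P' M /\ forall B, proper M B -> ~ P' B.
  apply: Zorn_bigcup => F FP tot.
  case: (pselect (exists2 X, F X & PG X)) => [[X0 FX0 PX0]|nX]; last first.
    right; apply/seteqP; split => [z [X FX Xz]|z] //.
    case: (FP X FX) => [PX|X0]; first by case: nX; exists X.
    by rewrite X0 in Xz.
  left.
  have memP : forall X z, F X -> X z -> PG X.
    by move=> X z FX Xz; case: (FP X FX) => // Xe; rewrite Xe in Xz.
  have two : forall X Y z w, F X -> F Y -> X z -> Y w -> exists2 Z, F Z & Z z /\ Z w.
    move=> X Y z w FX FY Xz Yw; case: (tot X Y FX FY) => [XY|YX].
      by exists Y => //; split => //; exact: XY.
    by exists X => //; split => //; exact: YX.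
  case: PX0 => h0 hcl hfun hv hu; split.
  - by exists X0.
  - move=> c x a y b [X FX Xx] [Y FY Yy].
    have [Z FZ [Zx Zy]] := two _ _ _ _ FX FY Xx Yy.
    exists Z => //; case: (memP _ _ FZ Zx) => _ cl _ _ _; exact: cl.
  - move=> x a b [X FX Xx] [Y FY Yy]; have [Z FZ [Zx Zy]] := two _ _ _ _ FX FY Xx Yy.
    case: (memP _ _ FZ Zx) => _ _ fn _ _; exact: fn Zx Zy.
  - by exists X0.
  - by move=> l hl; exists X0 => //; exact: hu.
case: PM => [PGM|M0]; last first.
  exfalso; apply: (maxM G0); last by left.
  rewrite M0; split; first by move=> z [].
  by move=> /(_ (0, 0)) h; apply: h; case: hG0.
case: (PGM) => h0 hcl hfun hv hu.
have tot : forall x, exists a, M (x, a).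
  move=> x; case: (pselect (exists a, M (x, a))) => // nx; exfalso.
  pose B : set (A * k) := fun z => exists s a c, M (s, a) /\ z = (s + c *: x, a).
  have MB : forall z, M z -> B z.
    by case=> s a Ms; exists s, a, 0; split => //; rewrite scale0r addr0.
  apply: (maxM B); first split.
  - by move=> z /MB.
  - move=> /(_ (x, 0)) h; apply: nx; exists 0; apply: h.
    by exists 0, 0, 1; split => //; rewrite add0r scale1r.
  left; split.
  - exact: MB.
  - move=> c0 z a z' a' [s [a1 [c1 [Ms E1]]]] [s' [a2 [c2 [Ms' E2]]]].
    case: E1 => -> ->; case: E2 => -> ->.
    exists (c0 *: s + s'), (c0 * a1 + a2), (c0 * c1 + c2); split; first exact: hcl.
    congr pair; rewrite scalerDr scalerA addrACA scalerDl //.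
  - move=> z a a' [s [a1 [c1 [Ms E1]]]] [s' [a2 [c2 [Ms' E2]]]].
    case: E1 => Ez ->; case: E2 => Ez' ->.
    case: (eqVneq c1 c2) => [ec|ne].
      by move: Ez'; rewrite Ez ec => /addIr es; move: Ms'; rewrite -es; exact: hfun.
    exfalso; apply: nx.
    have E : (c1 - c2) *: x = s' - s.
      rewrite scalerBl (_ : c1 *: x = s' + c2 *: x - s); last by rewrite -Ez' Ez addrC addKr.
      by rewrite addrAC addrK.
    have nz : c1 - c2 != 0 by rewrite subr_eq0.
    exists ((c1 - c2)^-1 * (a2 - a1) + 0).
    have -> : x = (c1 - c2)^-1 *: (-1 *: s + s') + 0.
      by rewrite addr0 scaleN1r (addrC (- s)) -E scalerA mulVf // scale1r.
    apply: (hcl) => //; rewrite (_ : a2 - a1 = -1 * a1 + a2); last by rewrite mulN1r addrC.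
    exact: hcl.
  - exact: MB.
  - by move=> l hl; apply: MB; exact: hu.
have [phi hphi] := choice tot.
exists phi; split.
- move=> c x y; apply: hfun (hphi _) _; apply: hcl; exact: hphi.
- by move=> l hl; apply: hfun (hphi _) (hu l hl).
- exact: hfun (hphi _) hv.
Qed.


Lemma FDB (s : seq A) : exists n (u : nat -> A) (e : nat -> A -> k),
  [/\ forall l, lin (e l), forall l, (l < n)%N -> u l \in s &
      forall w, w \in s -> w = \sum_(l <- iota 0 n) e l w *: u l].
Proof.
elim: s => [|v s [n [u [e [he hu hrec]]]]].
  by exists 0%N, (fun _ => 0), (fun _ _ => 0); split => // l c x y; rewrite mulr0 addr0.
have hspan : forall c : nat -> k, \sum_(l <- iota 0 n) c l *: u l =
    \sum_(l <- iota 0 n) e l (\sum_(m <- iota 0 n) c m *: u m) *: u l.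
  move=> c; transitivity (\sum_(m <- iota 0 n) c m *: \sum_(l <- iota 0 n) e l (u m) *: u l).
    rewrite big_seq [RHS]big_seq; apply: eq_bigr => m; rewrite mem_iota add0n => /andP [_ hm].
    by congr (_ *: _); apply: hrec; exact: hu.
  under eq_bigr => m _ do rewrite scaler_sumr.
  rewrite exchange_big; apply: eq_bigr => l _.
  by rewrite (lin_sum (he l)) scaler_suml; apply: eq_bigr => m _; rewrite (linZ (he l)) scalerA.
case: (pselect (exists c : nat -> k, v = \sum_(l <- iota 0 n) c l *: u l)) => [[c hc]|nc].
  exists n, u, e; split => //.
    by move=> l hl; rewrite inE hu ?orbT.
  by move=> w; rewrite inE => /orP [/eqP ->|/hrec //]; rewrite hc; exact: hspan.
have [phi [hphi hphu hphv]] := sep nc.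
exists n.+1, (fun l => if l == n then v else u l),
  (fun l => if l == n then phi else (fun x => e l x - e l v * phi x)).
split.
- move=> l; case: eqP => _ //; move=> c x y; rewrite (he l) hphi; ring.
- move=> l hl; case: eqP => [_|ne]; first by rewrite inE eqxx.
  by rewrite inE hu ?orbT //; lia.
- move=> w hw; rewrite -addn1 iotaD big_cat big_seq1 add0n eqxx /=.
  have E : forall F : nat -> A, \sum_(l <- iota 0 n) (if l == n then phi else (fun x => e l x - e l v * phi x)) w *:
        (if l == n then v else u l) = \sum_(l <- iota 0 n) (e l w - e l v * phi w) *: u l.
    move=> _; rewrite big_seq [RHS]big_seq; apply: eq_bigr => l; rewrite mem_iota add0n => /andP [_ hl].
    by rewrite ltn_eqF.
  rewrite (E (fun _ => 0)); move: hw; rewrite inE => /orP [/eqP ->|hw].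
    rewrite hphv scale1r big1 ?add0r // => l _; by rewrite mulr1 subrr scale0r.
  have -> : phi w = 0.
    rewrite (hrec w hw) (lin_sum hphi) big_seq big1 // => l; rewrite mem_iota add0n => /andP [_ hl].
    by rewrite (linZ hphi) hphu ?mulr0.
  rewrite scale0r addr0; transitivity (\sum_(l <- iota 0 n) e l w *: u l); first exact: (hrec w hw).
  by apply: eq_bigr => l _; rewrite mulr0 subr0.
Qed.

Lemma teq2I (t t' : seq (A * A)) :
  (forall f g, lin f -> lin g -> ev2 f g t = ev2 f g t') -> teq2 t t'.
Proof. by []. Qed.
Lemma teq2E' (t t' : seq (A * A)) : teq2 t t' -> forall f g, lin f -> lin g -> ev2 f g t = ev2 f g t'.
Proof. by move=> h f g hf hg; exact: h. Qed.

Lemma in_tensor_teq (P : A -> Prop) t t' : teq2 t t' -> in_tensor P t' -> in_tensor P t.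
Proof.
move=> e [t'' [h e']]; exists t''; split => //; apply: teq2I => f g hf hg.
by rewrite (teq2E' e hf hg) (teq2E' e' hf hg).
Qed.
Lemma in_tensor_nil (P : A -> Prop) : in_tensor P [::].
Proof. by exists [::]; split => //; apply: teq2I. Qed.
Lemma in_tensor_cat (P : A -> Prop) t1 t2 : in_tensor P t1 -> in_tensor P t2 -> in_tensor P (t1 ++ t2).
Proof.
move=> [t1' [h1 e1]] [t2' [h2 e2]]; exists (t1' ++ t2'); split.
  by move=> x; rewrite mem_cat => /orP [/h1|/h2].
by apply: teq2I => f g hf hg; rewrite !ev2_cat (teq2E' e1 hf hg) (teq2E' e2 hf hg).
Qed.
Lemma in_tensor_scale (P : A -> Prop) c t : (forall x, P x -> P (c *: x)) ->
  in_tensor P t -> in_tensor P (tscale c t).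
Proof.
move=> hP [t' [h e]]; exists (tscale c t'); split.
  by move=> x /mapP [y hy ->] /=; have [h1 h2] := h y hy; split => //; exact: hP.
by apply: teq2I => f g hf hg; rewrite !ev2_tscale // (teq2E' e hf hg).
Qed.
Lemma in_tensor_flatten (P : A -> Prop) (ts : seq (seq (A * A))) :
  (forall t, t \in ts -> in_tensor P t) -> in_tensor P (flatten ts).
Proof.
elim: ts => [|t ts IH] h /=; first exact: in_tensor_nil.
apply: in_tensor_cat; first by apply: h; rewrite inE eqxx.
by apply: IH => t' ht'; apply: h; rewrite inE ht' orbT.
Qed.

Lemma tensor_FDB (P : A -> Prop) (t : seq (A * A)) :
  (forall h, lin h -> P (\sum_(x <- t) h x.2 *: x.1)) ->
  (forall e, lin e -> P (\sum_(x <- t) e x.1 *: x.2)) ->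
  in_tensor P t.
Proof.
move=> HX HY.
have [n [u [e [he hu hrec]]]] := FDB (map fst t).
pose t1 := [seq (u l, \sum_(x <- t) e l x.1 *: x.2) | l <- iota 0 n].
have E1 : teq2 t t1.
  apply: teq2I => f g hf hg; rewrite /ev2 /t1 big_map.
  transitivity (\sum_(x <- t) \sum_(l <- iota 0 n) f (u l) * (e l x.1 * g x.2)).
    rewrite big_seq [RHS]big_seq; apply: eq_bigr => x hx.
    rewrite {1}(hrec x.1); last by apply/mapP; exists x.
    rewrite (lin_sum hf) mulr_suml; apply: eq_bigr => l _.
    by rewrite (linZ hf) mulrCA mulrA.
  rewrite exchange_big; apply: eq_bigr => l _ /=.
  by rewrite (lin_sum hg) mulr_sumr; apply: eq_bigr => x _; rewrite (linZ hg).
have [m [w [h [hh hw hrec2]]]] := FDB (map snd t1).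
pose t2 := [seq (\sum_(x <- t1) h j x.2 *: x.1, w j) | j <- iota 0 m].
have E2 : teq2 t1 t2.
  apply: teq2I => f g hf hg; rewrite /ev2 /t2 [RHS]big_map.
  transitivity (\sum_(x <- t1) \sum_(j <- iota 0 m) f x.1 * (h j x.2 * g (w j))).
    apply: eq_big_seq => x hx.
    rewrite {1}(hrec2 x.2); last by apply/mapP; exists x.
    rewrite (lin_sum hg) mulr_sumr; apply: eq_bigr => j _.
    by rewrite (linZ hg).
  rewrite exchange_big; apply: eq_bigr => j _ /=.
  rewrite (lin_sum hf) mulr_suml; apply: eq_bigr => x _; rewrite (linZ hf).
  by rewrite mulrCA mulrA [_ * f _]mulrC.
exists t2; split; last first.
  apply: teq2I => f g hf hg; by rewrite (teq2E' E1 hf hg) (teq2E' E2 hf hg).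
move=> z /mapP [j hj ->] /=; split.
  have -> : \sum_(x <- t1) h j x.2 *: x.1 = \sum_(x <- t) h j x.2 *: x.1.
    rewrite /t1 big_map.
    transitivity (\sum_(l <- iota 0 n) \sum_(x <- t) (h j x.2 * e l x.1) *: u l).
      apply: eq_bigr => l _ /=; rewrite (lin_sum (hh j)) scaler_suml; apply: eq_bigr => x _.
      by rewrite (linZ (hh j)) mulrC.
    rewrite exchange_big; rewrite big_seq [RHS]big_seq; apply: eq_bigr => x hx /=.
    rewrite [in RHS](hrec x.1); last by apply/mapP; exists x.
    by rewrite scaler_sumr; apply: eq_bigr => l _; rewrite scalerA.
  exact: HX.
have : w j \in map snd t1 by apply: hw; move: hj; rewrite mem_iota add0n => /andP [].
move=> /mapP [x /mapP [l hl ->] ->] /=; exact: HY.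
Qed.

End LinAlg.


Section Main.
Variables (R : realType) (k : fieldType) (A : algType k).
Variables (Gam : R * R -> Prop) (pi : R * R -> A -> A) (supp : A -> seq (R * R))
    (D : A -> seq (A * A)) (eps : A -> k).
Hypothesis HA : graded_conn_bialg Gam pi supp D eps.
Variable mu : option R.
Notation deg := (R * R)%type.

Lemma Hdm : discrete_monoid Gam. Proof. by case: HA. Qed.
Lemma Hgr : grading Gam pi supp. Proof. by case: HA. Qed.
Lemma pi_lin g : linA (pi g). Proof. by case: Hgr => h *; exact: h. Qed.
Lemma pi_id g x : pi g (pi g x) = pi g x. Proof. by case: Hgr. Qed.
Lemma pi_ne g h x : g != h -> pi g (pi h x) = 0. Proof. by case: Hgr => _ _ h0 *; exact: h0. Qed.
Lemma pi_supp g x : pi g x != 0 -> Gam g /\ g \in supp x. Proof. by case: Hgr => _ _ _ h0 *; exact: h0. Qed.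
Lemma pi_dec x : x = \sum_(g <- undup (supp x)) pi g x. Proof. by case: Hgr. Qed.
Lemma homog_mul g h x y : homog pi g x -> homog pi h y -> homog pi (dadd g h) (x * y).
Proof. by case: HA => _ _ [h0 _] *; exact: h0. Qed.
Lemma homog1 : homog pi (0,0) 1. Proof. by case: HA => _ _ [_ h0] *. Qed.
Lemma Hbi : bialg_on (fun _ => True) D eps. Proof. by case: HA => _ _ _ _ []. Qed.
Lemma Dlin c a b : teq2 (D (c *: a + b)) (tscale c (D a) ++ D b).
Proof. by case: Hbi => h *; exact: h. Qed.
Lemma Dcoass a : teq3 (comul_l D (D a)) (comul_r D (D a)).
Proof. by case: Hbi => _ h *; exact: h. Qed.
Lemma Dcounit a : \sum_(y <- D a) eps y.1 *: y.2 = a /\ \sum_(y <- D a) eps y.2 *: y.1 = a.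
Proof. by case: Hbi => _ _ h *; exact: h. Qed.
Lemma Dmul a b : teq2 (D (a * b)) (tmul (D a) (D b)).
Proof. by case: Hbi => _ _ _ [h _] *; exact: h. Qed.
Lemma D1 : teq2 (D 1) [:: (1, 1)].
Proof. by case: Hbi => _ _ _ [_ h]. Qed.
Lemma eps_lin c a b : eps (c *: a + b) = c * eps a + eps b.
Proof. by case: Hbi => _ _ _ _ [h _]; exact: h. Qed.
Lemma eps_mul a b : eps (a * b) = eps a * eps b.
Proof. by case: Hbi => _ _ _ _ [_ [h _]]; exact: h. Qed.
Lemma eps1 : eps 1 = 1.
Proof. by case: Hbi => _ _ _ _ [_ [_ h]]. Qed.
Lemma Dgrad g x b b' : homog pi g x -> dadd b b' != g -> teq2 (tmap2 (pi b) (pi b') (D x)) [::].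
Proof. by case: HA => _ _ _ _ [_ [h _]]; exact: h. Qed.
Lemma eps_grad g x : homog pi g x -> g != (0, 0) -> eps x = 0.
Proof. by case: HA => _ _ _ _ [_ [_ h]]; exact: h. Qed.

Lemma teq2_nilE (t : seq (A * A)) : teq2 t [::] <-> forall f g, lin f -> lin g -> ev2 f g t = 0.
Proof. by split => h f g hf hg; have := h f g hf hg; rewrite /ev2 big_nil. Qed.

Lemma epsL : lin eps. Proof. by move=> c x y; rewrite eps_lin. Qed.

Lemma Gam_pos g : Gam g -> 0 <= g.1 /\ (g.1 = 0 -> 0 <= g.2).
Proof.
case: Hdm => _ _ hp _ /hp [h|[h1 h2]]; split => //; first exact: ltW.
  by move=> h0; move: h; rewrite h0 ltxx.
by rewrite h1.
Qed.

Definition LE (b : deg) := if mu is Some m then b.2 <= m * b.1 else true.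

Lemma Gam_leP b : Gam_le Gam mu b <-> Gam b /\ LE b.
Proof.
rewrite /LE; split.
  case=> nu [hle [Gb hs]]; split => //; case: mu hle => [m|] //.
  case: nu hs => [a|] //= /eqP -> hle.
  by rewrite ler_wpM2r //; case: (Gam_pos Gb).
case=> Gb hLE; case: mu hLE => [m|] hLE.
  have [hp h0] := Gam_pos Gb; have [z|nz] := eqVneq b.1 0.
    exists (Some m); split; first by rewrite /= lexx.
    split => //=.
    have := h0 z; move: hLE; rewrite z mulr0 => h1 h2.
    by apply/eqP; apply: le_anti; rewrite h1 h2.
  have bp : 0 < b.1 by rewrite lt_def nz hp.
  exists (Some (b.2 / b.1)); split => /=; first by rewrite ler_pdivrMr.
  by split => //; rewrite divfK.
have [z|nz] := eqVneq b.1 0.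
  by exists None; split => //; split => //=; rewrite z.
by exists (Some (b.2 / b.1)); split => //; split => //=; rewrite divfK.
Qed.

Lemma in_slope0 : in_slope mu (0, 0).
Proof. by case: mu => [m|] //=; rewrite mulr0. Qed.

Lemma slope_add b c : in_slope mu b -> in_slope mu c -> in_slope mu (dadd b c).
Proof.
case: mu => [m|] /= /eqP hb /eqP hc; apply/eqP; first by rewrite hb hc mulrDr.
by rewrite hb hc addr0.
Qed.

Lemma slope_sub b c : in_slope mu (dadd b c) -> in_slope mu b -> in_slope mu c.
Proof.
case: mu => [m|] /= /eqP hbc /eqP hb; apply/eqP.
  by move: hbc; rewrite hb mulrDr => /addrI.
by move: hbc; rewrite hb add0r.
Qed.

Lemma LE_add b c : LE b -> LE c -> LE (dadd b c).
Proof. by rewrite /LE; case: mu => [m|] //= hb hc; rewrite mulrDr lerD. Qed.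

Lemma LE_sub b c : LE (dadd b c) -> in_slope mu b -> LE c.
Proof.
rewrite /LE; case: mu => [m|] //= hbc /eqP hb.
by move: hbc; rewrite hb mulrDr lerD2l.
Qed.

Lemma slope_LE b : in_slope mu b -> LE b.
Proof. by rewrite /LE; case: mu => [m|] //= /eqP ->. Qed.

Lemma split_slope b c : Gam b -> Gam c -> LE b -> LE c -> in_slope mu (dadd b c) ->
  in_slope mu b /\ in_slope mu c.
Proof.
move=> Gb Gc; have [hb _] := Gam_pos Gb; have [hc _] := Gam_pos Gc.
rewrite /LE; case: mu => [m|] /= lb lc /eqP h.
  have e1 : b.2 = m * b.1.
    apply: le_anti; rewrite lb /=; move: h; rewrite mulrDr => h.
    by rewrite -(lerD2r c.2) h lerD2l.
  split; apply/eqP => //; by move: h; rewrite mulrDr e1 => /addrI.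
have e1 : b.1 = 0 by apply: le_anti; rewrite hb andbT -h lerDl.
by split; apply/eqP => //; move: h; rewrite e1 add0r.
Qed.


Definition p := p_mu pi supp mu.
Definition SS (xs : seq A) := undup (flatten (map supp xs)).
Lemma SS_uniq xs : uniq (SS xs). Proof. exact: undup_uniq. Qed.
Lemma SS_cover x xs : x \in xs -> {subset supp x <= SS xs}.
Proof.
move=> hx g hg; rewrite mem_undup; apply/flattenP; exists (supp x) => //.
by apply/mapP; exists x.
Qed.

Lemma dec_S x S : uniq S -> {subset supp x <= S} -> x = \sum_(g <- S) pi g x.
Proof.
move=> uS sS; rewrite {1}(pi_dec x); apply: big_uniq_supp => //.
- exact: undup_uniq.
- by move=> g /= /pi_supp [_]; rewrite mem_undup.
- by move=> g /= /pi_supp [_ /sS].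
Qed.

Lemma pS x S : uniq S -> {subset supp x <= S} ->
  p x = \sum_(g <- S) (if in_slope mu g then pi g x else 0).
Proof.
move=> uS sS; rewrite /p /p_mu big_mkcond /=; apply: big_uniq_supp => //.
- exact: undup_uniq.
- move=> g; case: ifP => _ H; last by rewrite eqxx in H.
  by have [_] := pi_supp H; rewrite mem_undup.
- move=> g; case: ifP => _ H; last by rewrite eqxx in H.
  by have [_ /sS] := pi_supp H.
Qed.

Lemma p_lin : linA p.
Proof.
move=> c x y; set S := undup (supp x ++ supp y ++ supp (c *: x + y)).
have uS : uniq S by exact: undup_uniq.
rewrite !(@pS _ S uS); first last.
- by move=> g hg; rewrite mem_undup !mem_cat hg ?orbT.
- by move=> g hg; rewrite mem_undup !mem_cat hg ?orbT.
- by move=> g hg; rewrite mem_undup !mem_cat hg ?orbT.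
rewrite scaler_sumr -big_split; apply: eq_bigr => g _ /=.
by case: ifP => _; rewrite ?pi_lin ?scaler0 ?addr0.
Qed.

Lemma pi_homog b g w : homog pi g w -> pi b w = if b == g then w else 0.
Proof.
move=> hw; case: eqP => [->|/eqP ne]; first exact: hw.
by rewrite -hw pi_ne.
Qed.

Lemma p_homog g w : homog pi g w -> p w = if in_slope mu g then w else 0.
Proof.
move=> hw; rewrite (@pS _ (undup (supp w)) (undup_uniq _)); last first.
  by move=> h; rewrite mem_undup.
rewrite (@big_single _ _ _ (fun h => if in_slope mu h then pi h w else 0) g) ?undup_uniq //=.
- by case: ifP => //; rewrite hw.
- move=> h; case: ifP => _ H; last by rewrite eqxx in H.
  by have [_] := pi_supp H; rewrite mem_undup.
- by move=> h ne; rewrite (pi_homog _ hw) (negbTE ne); case: ifP.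
Qed.

Lemma p1 : p 1 = 1.
Proof. by rewrite (p_homog homog1) in_slope0. Qed.

Lemma eps_p x : eps (p x) = eps x.
Proof.
have uS := undup_uniq (supp x).
have sS : {subset supp x <= undup (supp x)} by move=> g; rewrite mem_undup.
rewrite (pS uS sS) [in RHS](dec_S uS sS) !(lin_sum epsL); apply: eq_bigr => g _.
case: ifP => hs //; rewrite (lin0 epsL) (@eps_grad g) //; first exact: pi_id.
by apply: contraFneq hs => ->; exact: in_slope0.
Qed.

Lemma lin_if (f : A -> k) (b : bool) x : lin f -> f (if b then x else 0) = if b then f x else 0.
Proof. by move=> hf; case: b => //; rewrite (lin0 hf). Qed.

Lemma EXP2 (f g : A -> k) (t : seq (A * A)) (S : seq deg) (Q1 Q2 : pred deg) : lin f -> lin g ->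
  ev2 (fun x => f (\sum_(b <- S) if Q1 b then pi b x else 0))
      (fun x => g (\sum_(c <- S) if Q2 c then pi c x else 0)) t
  = \sum_(b <- S) \sum_(c <- S)
      (if Q1 b && Q2 c then ev2 (fun x => f (pi b x)) (fun x => g (pi c x)) t else 0).
Proof.
move=> hf hg.
have E : forall y : A * A,
   f (\sum_(b <- S) if Q1 b then pi b y.1 else 0) * g (\sum_(c <- S) if Q2 c then pi c y.2 else 0)
   = \sum_(b <- S) \sum_(c <- S) (if Q1 b && Q2 c then f (pi b y.1) * g (pi c y.2) else 0).
  move=> y; rewrite !lin_sum // mulr_suml; apply: eq_bigr => b _; rewrite mulr_sumr.
  apply: eq_bigr => c _; rewrite !lin_if //.
  by case: (Q1 b); case: (Q2 c); rewrite /= ?mul0r ?mulr0.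
rewrite /ev2 (eq_bigr _ (fun y _ => E y)) exchange_big; apply: eq_bigr => b _.
rewrite exchange_big; apply: eq_bigr => c _.
by case: ifP => //; rewrite big1.
Qed.

Definition prodQ (Q : deg -> deg -> bool) (S : seq deg) (u v : A) :=
  \sum_(b1 <- S) \sum_(b2 <- S) (if Q b1 b2 then pi b1 u * pi b2 v else 0).
Definition Tq (f g : A -> k) (ta tb : seq (A * A)) b1 b2 c1 c2 :=
  \sum_(y <- ta) \sum_(z <- tb) f (pi b1 y.1 * pi b2 z.1) * g (pi c1 y.2 * pi c2 z.2).

Lemma lin_prodQ (f : A -> k) Q S u v : lin f ->
  f (prodQ Q S u v) = \sum_(b1 <- S) \sum_(b2 <- S) (if Q b1 b2 then f (pi b1 u * pi b2 v) else 0).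
Proof.
move=> hf; rewrite /prodQ (lin_sum hf); apply: eq_bigr => b1 _; rewrite (lin_sum hf).
by apply: eq_bigr => b2 _; rewrite lin_if.
Qed.

Lemma swap3 (V : nmodType) (I1 I2 I3 : Type) (r1 : seq I1) (r2 : seq I2) (r3 : seq I3)
  (F : I1 -> I2 -> I3 -> V) :
  \sum_(y <- r1) \sum_(z <- r2) \sum_(b <- r3) F y z b =
  \sum_(b <- r3) \sum_(y <- r1) \sum_(z <- r2) F y z b.
Proof. by under eq_bigr => y _ do rewrite exchange_big; rewrite exchange_big. Qed.

Lemma QUAD (f g : A -> k) (ta tb : seq (A * A)) S Q1 Q2 : lin f -> lin g ->
  \sum_(y <- ta) \sum_(z <- tb) f (prodQ Q1 S y.1 z.1) * g (prodQ Q2 S y.2 z.2) =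
  \sum_(b1 <- S) \sum_(b2 <- S) \sum_(c1 <- S) \sum_(c2 <- S)
     (if Q1 b1 b2 && Q2 c1 c2 then Tq f g ta tb b1 b2 c1 c2 else 0).
Proof.
move=> hf hg.
have E : forall u v u' v', f (prodQ Q1 S u v) * g (prodQ Q2 S u' v') =
  \sum_(b1 <- S) \sum_(b2 <- S) \sum_(c1 <- S) \sum_(c2 <- S)
     (if Q1 b1 b2 && Q2 c1 c2 then f (pi b1 u * pi b2 v) * g (pi c1 u' * pi c2 v') else 0).
  move=> u v u' v'; rewrite !lin_prodQ // mulr_suml; apply: eq_bigr => b1 _.
  rewrite mulr_suml; apply: eq_bigr => b2 _; rewrite mulr_sumr; apply: eq_bigr => c1 _.
  rewrite mulr_sumr; apply: eq_bigr => c2 _.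
  by case: (Q1 b1 b2); case: (Q2 c1 c2); rewrite /= ?mul0r ?mulr0.
under eq_bigr => y _ do under eq_bigr => z _ do rewrite E.
rewrite swap3; apply: eq_bigr => b1 _; rewrite swap3; apply: eq_bigr => b2 _.
rewrite swap3; apply: eq_bigr => c1 _; rewrite swap3; apply: eq_bigr => c2 _.
case: ifP => _ //; rewrite big1 // => y _; exact: big1.
Qed.

Lemma Tva f g ta tb b1 b2 c1 c2 : lin f -> lin g ->
  teq2 (tmap2 (pi b1) (pi c1) ta) [::] -> Tq f g ta tb b1 b2 c1 c2 = 0.
Proof.
move=> hf hg /teq2_nilE h; rewrite /Tq exchange_big big1 // => z _.
have := h _ _ (lin_mulr (pi b2 z.1) hf) (lin_mulr (pi c2 z.2) hg).
by rewrite ev2_tmap2.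
Qed.

Lemma Tvb f g ta tb b1 b2 c1 c2 : lin f -> lin g ->
  teq2 (tmap2 (pi b2) (pi c2) tb) [::] -> Tq f g ta tb b1 b2 c1 c2 = 0.
Proof.
move=> hf hg /teq2_nilE h; rewrite /Tq big1 // => y _.
have := h _ _ (lin_mull (pi b1 y.1) hf) (lin_mull (pi c1 y.2) hg).
by rewrite ev2_tmap2.
Qed.


Lemma teq2E (t t' : seq (A * A)) : teq2 t t' -> forall f g, lin f -> lin g -> ev2 f g t = ev2 f g t'.
Proof. by move=> h f g hf hg; exact: h. Qed.

Definition EV (f g : A -> k) x := ev2 f g (D x).
Lemma EV_lin f g : lin f -> lin g -> lin (EV f g).
Proof. by move=> hf hg c a b; rewrite /EV (teq2E (Dlin c a b)) // ev2_cat ev2_tscale. Qed.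

Lemma nLset_teq x b : ~ Lset pi D x b -> forall g, teq2 (tmap2 (pi b) (pi g) (D x)) [::].
Proof. by move=> nL g; case: (pselect (teq2 (tmap2 (pi b) (pi g) (D x)) [::])) => // H; case: nL; exists g. Qed.

Lemma Lset_Gam x b : Lset pi D x b -> Gam b.
Proof.
case=> g H; case: (pselect (Gam b)) => // nG; case: H; apply/teq2_nilE => f f' hf hf'.
rewrite ev2_tmap2 /ev2 big1 // => y _ /=.
have [->|/pi_supp [Gb _]] := eqVneq (pi b y.1) 0; first by rewrite (lin0 hf) mul0r.
by case: nG.
Qed.

Definition Lok a := forall b, Lset pi D a b -> Gam_le Gam mu b.

Lemma Lok_teq a b : Lok a -> ~ Gam_le Gam mu b -> forall g, teq2 (tmap2 (pi b) (pi g) (D a)) [::].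
Proof. by move=> La nb; apply: nLset_teq => /La. Qed.

Lemma Gam0 : Gam (0, 0). Proof. by case: Hdm. Qed.
Lemma Gam_add g h : Gam g -> Gam h -> Gam (dadd g h). Proof. by case: Hdm => _ H *; exact: H. Qed.

Lemma ss1 : semistable Gam pi D mu 1.
Proof.
exists (0, 0); split; [exact: homog1 | exact: Gam0 | exact: in_slope0 |].
move=> b Lb; have [->|nb] := eqVneq b (0, 0).
  by apply/Gam_leP; split; [exact: Gam0 | rewrite /LE; case: mu => [m|] //=; rewrite mulr0].
case: Lb => g; case; apply/teq2_nilE => f f' hf hf'.
rewrite ev2_tmap2 (teq2E D1 (lin_comp hf (pi_lin b)) (lin_comp hf' (pi_lin g))).
by rewrite /ev2 big_seq1 /= (pi_homog _ homog1) (negbTE nb) (lin0 hf) mul0r.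
Qed.

Definition comps (t : seq (A * A)) := flatten [seq [:: y.1; y.2] | y <- t].
Lemma comps1 y t : y \in t -> y.1 \in comps t.
Proof. by move=> hy; apply/flattenP; exists [:: y.1; y.2]; [apply/mapP; exists y | rewrite inE eqxx]. Qed.
Lemma comps2 y t : y \in t -> y.2 \in comps t.
Proof. by move=> hy; apply/flattenP; exists [:: y.1; y.2]; [apply/mapP; exists y | rewrite !inE eqxx orbT]. Qed.

Lemma mul_dec u v S : uniq S -> {subset supp u <= S} -> {subset supp v <= S} ->
  u * v = \sum_(b1 <- S) \sum_(b2 <- S) pi b1 u * pi b2 v.
Proof.
move=> uS su sv; have Eu := dec_S uS su; have Ev := dec_S uS sv.
rewrite [in LHS]Eu [in LHS]Ev mulr_suml; apply: eq_bigr => b1 _; by rewrite mulr_sumr.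
Qed.

Lemma pi_mul be u v S : uniq S -> {subset supp u <= S} -> {subset supp v <= S} ->
  pi be (u * v) = prodQ (fun b1 b2 => dadd b1 b2 == be) S u v.
Proof.
move=> uS su sv; rewrite (mul_dec uS su sv) (linA_sum (pi_lin be)); apply: eq_bigr => b1 _.
rewrite (linA_sum (pi_lin be)); apply: eq_bigr => b2 _.
by rewrite (pi_homog be (homog_mul (pi_id b1 u) (pi_id b2 v))) eq_sym.
Qed.

Lemma p_mul u v S : uniq S -> {subset supp u <= S} -> {subset supp v <= S} ->
  p (u * v) = prodQ (fun b1 b2 => in_slope mu (dadd b1 b2)) S u v.
Proof.
move=> uS su sv; rewrite (mul_dec uS su sv) (linA_sum p_lin); apply: eq_bigr => b1 _.
rewrite (linA_sum p_lin); apply: eq_bigr => b2 _.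
by rewrite (p_homog (homog_mul (pi_id b1 u) (pi_id b2 v))).
Qed.

Lemma pp_mul u v S : uniq S -> {subset supp u <= S} -> {subset supp v <= S} ->
  p u * p v = prodQ (fun b1 b2 => in_slope mu b1 && in_slope mu b2) S u v.
Proof.
move=> uS su sv; rewrite (pS uS su) (pS uS sv) mulr_suml; apply: eq_bigr => b1 _.
rewrite mulr_sumr; apply: eq_bigr => b2 _.
by case: (in_slope mu b1); case: (in_slope mu b2); rewrite /= ?mul0r ?mulr0.
Qed.

Lemma ev2_tmul f g (t t' : seq (A * A)) :
  ev2 f g (tmul t t') = \sum_(y <- t) \sum_(z <- t') f (y.1 * z.1) * g (y.2 * z.2).
Proof. by rewrite /ev2 /tmul big_allpairs_dep. Qed.

Lemma ss_mul a b : semistable Gam pi D mu a -> semistable Gam pi D mu b ->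
  semistable Gam pi D mu (a * b).
Proof.
move=> [g [ha Gg sg La]] [h [hb Gh sh Lb]].
exists (dadd g h); split; [exact: homog_mul | exact: Gam_add | exact: slope_add |].
move=> be Lbe; case: (pselect (Gam_le Gam mu be)) => // nbe; exfalso.
case: Lbe => ga; case; apply/teq2_nilE => f f' hf hf'.
have lf := lin_comp hf (pi_lin be); have lf' := lin_comp hf' (pi_lin ga).
rewrite ev2_tmap2 (teq2E (Dmul a b)) // ev2_tmul.
set S := SS (comps (D a ++ D b)).
have uS : uniq S by exact: SS_uniq.
have cov : forall y, y \in D a ++ D b -> {subset supp y.1 <= S} /\ {subset supp y.2 <= S}.
  by move=> y hy; split; apply: SS_cover; [exact: comps1 | exact: comps2].
have -> : \sum_(y <- D a) \sum_(z <- D b) f (pi be (y.1 * z.1)) * f' (pi ga (y.2 * z.2)) =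
   \sum_(y <- D a) \sum_(z <- D b) f (prodQ (fun b1 b2 => dadd b1 b2 == be) S y.1 z.1) *
         f' (prodQ (fun b1 b2 => dadd b1 b2 == ga) S y.2 z.2).
  rewrite big_seq [RHS]big_seq; apply: eq_bigr => y hy.
  rewrite big_seq [RHS]big_seq; apply: eq_bigr => z hz.
  have [c1 c2] : {subset supp y.1 <= S} /\ {subset supp y.2 <= S} by apply: cov; rewrite mem_cat hy.
  have [d1 d2] : {subset supp z.1 <= S} /\ {subset supp z.2 <= S} by apply: cov; rewrite mem_cat hz orbT.
  by rewrite (pi_mul _ uS c1 d1) (pi_mul _ uS c2 d2).
rewrite QUAD //; apply: big1 => b1 _; apply: big1 => b2 _; apply: big1 => c1 _; apply: big1 => c2 _.
case: ifP => // /andP [/eqP e1 _].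
case: (pselect (Gam_le Gam mu b1)) => h1; last first.
  by apply: Tva => //; apply: Lok_teq.
case: (pselect (Gam_le Gam mu b2)) => h2; last first.
  by apply: Tvb => //; apply: Lok_teq.
case: nbe; rewrite -e1; move/Gam_leP: h1 => [G1 L1]; move/Gam_leP: h2 => [G2 L2].
by apply/Gam_leP; split; [exact: Gam_add | exact: LE_add].
Qed.

Lemma span_lin (P : A -> Prop) c a b : Defs.span P a -> Defs.span P b -> Defs.span P (c *: a + b).
Proof.
move=> [s1 [h1 ->]] [s2 [h2 ->]]; exists ([seq (c * y.1, y.2) | y <- s1] ++ s2); split.
  by move=> y; rewrite mem_cat => /orP [/mapP [z hz ->]|]; [exact: (h1 z hz) | exact: h2].
rewrite big_cat big_map scaler_sumr; congr (_ + _); apply: eq_bigr => y _.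
by rewrite scalerA.
Qed.
Lemma span_el (P : A -> Prop) x : P x -> Defs.span P x.
Proof.
by move=> hx; exists [:: (1, x)]; split; [move=> y; rewrite inE => /eqP -> | rewrite big_seq1 scale1r].
Qed.
Lemma span0 (P : A -> Prop) : Defs.span P 0.
Proof. by exists [::]; split => //; rewrite big_nil. Qed.
Lemma span_mono (P Q : A -> Prop) x : (forall y, P y -> Q y) -> Defs.span P x -> Defs.span Q x.
Proof. by move=> h [s [hs ->]]; exists s; split => // y /hs /h. Qed.
Lemma span_mul (P : A -> Prop) a b : (forall x y, P x -> P y -> P (x * y)) ->
  Defs.span P a -> Defs.span P b -> Defs.span P (a * b).
Proof.
move=> hP [s1 [h1 ->]] [s2 [h2 ->]].
exists [seq (y.1 * z.1, y.2 * z.2) | y <- s1, z <- s2]; split.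
  by move=> w /allpairsP [[y z] [hy hz ->]] /=; apply: hP; [exact: h1 | exact: h2].
rewrite big_allpairs_dep mulr_suml; apply: eq_bigr => y _; rewrite mulr_sumr; apply: eq_bigr => z _.
by rewrite -scalerAl -scalerAr scalerA.
Qed.
Lemma span_eval (F : A -> k) (s : seq (k * A)) : lin F ->
  F (\sum_(y <- s) y.1 *: y.2) = \sum_(y <- s) y.1 * F y.2.
Proof. by move=> hF; rewrite (lin_sum hF); apply: eq_bigr => y _; rewrite (linZ hF). Qed.

Definition Dm x := Delta_mu pi supp D mu x.
Lemma ev2_Dm f g x : ev2 f g (Dm x) = EV (fun y => f (p y)) (fun y => g (p y)) x.
Proof. by rewrite /Dm /Delta_mu ev2_tmap2. Qed.
Lemma EVm_lin f g : lin f -> lin g -> lin (fun x => ev2 f g (Dm x)).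
Proof.
move=> hf hg c x y; rewrite !ev2_Dm; apply: EV_lin; exact: lin_comp p_lin.
Qed.


Lemma ev2_flatten f g (ts : seq (seq (A * A))) : ev2 f g (flatten ts) = \sum_(t <- ts) ev2 f g t.
Proof. by rewrite /ev2 big_flatten. Qed.

Lemma Dgrad0 f g d1 d2 b x : lin f -> lin g -> homog pi b x -> dadd d1 d2 != b ->
  EV (fun y => f (pi d1 y)) (fun y => g (pi d2 y)) x = 0.
Proof.
move=> hf hg hx ne; have := teq2E (Dgrad hx ne) hf hg.
by rewrite ev2_tmap2 ev2_nil.
Qed.

Lemma EV_pi f g d1 d2 x : lin f -> lin g ->
  EV (fun y => f (pi d1 y)) (fun y => g (pi d2 y)) (pi (dadd d1 d2) x) =
  EV (fun y => f (pi d1 y)) (fun y => g (pi d2 y)) x.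
Proof.
move=> hf hg; set M := EV _ _.
have lM : lin M by apply: EV_lin; apply: lin_comp => //; exact: pi_lin.
have uS := undup_uniq (supp x).
have sS : {subset supp x <= undup (supp x)} by move=> h; rewrite mem_undup.
rewrite [in RHS](dec_S uS sS) (lin_sum lM).
rewrite (@big_single _ _ _ (fun b => M (pi b x)) (dadd d1 d2)) //.
- move=> b nz; case: (eqVneq (pi b x) 0) => [e|/pi_supp [_]]; last by rewrite mem_undup.
  by move: nz; rewrite e (lin0 lM) eqxx.
- by move=> b nb; apply: Dgrad0 => //; [exact: pi_id | rewrite eq_sym].
Qed.

Lemma nL_zero a b (F N : A -> k) : ~ Lset pi D a b -> lin F -> lin N ->
  \sum_(x <- D a) F (pi b x.1) * N x.2 = 0.
Proof.
move=> nL hF hN; set S := SS (comps (D a)).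
transitivity (\sum_(x <- D a) \sum_(c <- S) F (pi b x.1) * N (pi c x.2)).
  apply: eq_big_seq => x hx.
  by rewrite {1}(dec_S (SS_uniq _) (SS_cover (comps2 hx))) (lin_sum hN) mulr_sumr.
rewrite sum_exchange big1 // => c _.
have := teq2E (nLset_teq nL c) hF hN.
by rewrite ev2_tmap2 ev2_nil.
Qed.

Lemma ev3_lg (F G H : A -> k) (D' : A -> seq (A * A)) t :
  \sum_(w <- comul_l D' t) F w.1.1 * G w.1.2 * H w.2 = \sum_(x <- t) ev2 F G (D' x.1) * H x.2.
Proof.
rewrite /comul_l big_flatten big_map; apply: eq_bigr => x _.
by rewrite big_map /ev2 mulr_suml.
Qed.
Lemma ev3_rg (F G H : A -> k) (D' : A -> seq (A * A)) t :
  \sum_(w <- comul_r D' t) F w.1.1 * G w.1.2 * H w.2 = \sum_(x <- t) F x.1 * ev2 G H (D' x.2).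
Proof.
rewrite /comul_r big_flatten big_map; apply: eq_bigr => x _.
by rewrite big_map /ev2 mulr_sumr; apply: eq_bigr => y _; rewrite mulrA.
Qed.
Lemma coass (F G H : A -> k) a : lin F -> lin G -> lin H ->
  \sum_(x <- D a) EV F G x.1 * H x.2 = \sum_(x <- D a) F x.1 * EV G H x.2.
Proof. by move=> hF hG hH; rewrite -ev3_lg -ev3_rg; exact: Dcoass. Qed.

Definition PP := Defs.span (semistable Gam pi D mu).

Lemma X_ok a g be ga h : homog pi g a -> Lok a -> in_slope mu be -> dadd be ga = g -> lin h ->
  PP (\sum_(y <- D a) h (pi ga y.2) *: pi be y.1).
Proof.
move=> ha La sbe ebg hh; set X := \sum_(y <- D a) _.
have hX : pi be X = X.
  by rewrite /X (linA_sum (pi_lin be)); apply: eq_bigr => y _; rewrite (linAZ (pi_lin be)) pi_id.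
case: (eqVneq X 0) => [->|nz]; first exact: span0.
apply: span_el; exists be; split => //.
  by have := @pi_supp be X; rewrite hX => /(_ nz) [].
move=> b' Lb'; case: (pselect (Gam_le Gam mu b')) => // nb; exfalso.
case: Lb' => de; case; apply/teq2_nilE => f g' hf hg'; rewrite ev2_tmap2.
set M := EV (fun y => f (pi b' y)) (fun y => g' (pi de y)).
have lM : lin M by apply: EV_lin; apply: lin_comp => //; exact: pi_lin.
change (M X = 0).
rewrite /X (lin_sum lM).
under eq_bigr => y _ do rewrite (linZ lM).
case: (eqVneq (dadd b' de) be) => [e|ne]; last first.
  by rewrite big1 // => y _; rewrite /M (Dgrad0 _ _ (pi_id be y.1) ne) ?mulr0.
have E : forall y, M (pi be y) = M y by move=> y; rewrite -e; exact: EV_pi.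
under eq_bigr => y _ do rewrite E mulrC.
rewrite /M (@coass _ _ (fun y => h (pi ga y)) a (lin_comp hf (pi_lin b'))
   (lin_comp hg' (pi_lin de)) (lin_comp hh (pi_lin ga))).
apply: nL_zero => //; first by move/La.
by apply: EV_lin; apply: lin_comp => //; exact: pi_lin.
Qed.

Lemma Y_ok a g be ga e : homog pi g a -> Lok a -> in_slope mu be -> dadd be ga = g ->
  in_slope mu ga -> lin e -> PP (\sum_(y <- D a) e (pi be y.1) *: pi ga y.2).
Proof.
move=> ha La sbe ebg sga he; set Y := \sum_(y <- D a) _.
have hY : pi ga Y = Y.
  by rewrite /Y (linA_sum (pi_lin ga)); apply: eq_bigr => y _; rewrite (linAZ (pi_lin ga)) pi_id.
case: (eqVneq Y 0) => [->|nz]; first exact: span0.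
apply: span_el; exists ga; split => //.
  by have := @pi_supp ga Y; rewrite hY => /(_ nz) [].
move=> b' Lb'; have Gb' := Lset_Gam Lb'.
case: (pselect (Gam_le Gam mu b')) => // nb; exfalso.
case: Lb' => de; case; apply/teq2_nilE => f g' hf hg'; rewrite ev2_tmap2.
set M := EV (fun y => f (pi b' y)) (fun y => g' (pi de y)).
have lM : lin M by apply: EV_lin; apply: lin_comp => //; exact: pi_lin.
change (M Y = 0).
rewrite /Y (lin_sum lM).
under eq_bigr => y _ do rewrite (linZ lM).
case: (eqVneq (dadd b' de) ga) => [e2|ne]; last first.
  by rewrite big1 // => y _; rewrite /M (Dgrad0 _ _ (pi_id ga y.2) ne) ?mulr0.
have E : forall y, M (pi ga y) = M y by move=> y; rewrite -e2; exact: EV_pi.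
under eq_bigr => y _ do rewrite E.
rewrite /M -(@coass (fun y => e (pi be y)) _ _ a (lin_comp he (pi_lin be))
   (lin_comp hf (pi_lin b')) (lin_comp hg' (pi_lin de))).
have E2 : forall x, EV (fun y => e (pi be y)) (fun y => f (pi b' y)) x =
     EV (fun y => e (pi be y)) (fun y => f (pi b' y)) (pi (dadd be b') x).
  by move=> x; rewrite EV_pi.
under eq_bigr => x _ do rewrite E2.
apply: (@nL_zero a (dadd be b') (EV (fun y => e (pi be y)) (fun y => f (pi b' y)))
   (fun y => g' (pi de y))).
- move=> L; apply: nb; have := La _ L; move/Gam_leP => [_ hle]; apply/Gam_leP; split => //.
  exact: LE_sub hle sbe.
- by apply: EV_lin; apply: lin_comp => //; exact: pi_lin.
- exact: lin_comp hg' (pi_lin de).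
Qed.

Lemma EVp_exp f g y : lin f -> lin g ->
  EV (fun x => f (p x)) (fun x => g (p x)) y =
  \sum_(b <- SS (comps (D y))) \sum_(c <- SS (comps (D y)))
    (if in_slope mu b && in_slope mu c then EV (fun x => f (pi b x)) (fun x => g (pi c x)) y else 0).
Proof.
move=> hf hg; rewrite /EV -EXP2 //; rewrite /ev2; apply: eq_big_seq => x hx /=.
by rewrite (pS (SS_uniq _) (SS_cover (comps1 hx))) (pS (SS_uniq _) (SS_cover (comps2 hx))).
Qed.

Lemma Dm_tensor_ss a : semistable Gam pi D mu a -> in_tensor PP (Dm a).
Proof.
move=> [g [ha Gg sg La]].
set S := SS (comps (D a)).
pose T b c := if in_slope mu b && in_slope mu c then tmap2 (pi b) (pi c) (D a) else [::].
apply: (@in_tensor_teq _ _ _ _ (flatten [seq flatten [seq T b c | c <- S] | b <- S])).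
  apply: teq2I => f g' hf hg'.
  rewrite ev2_Dm EVp_exp // ev2_flatten big_map; apply: eq_bigr => b _.
  rewrite ev2_flatten big_map; apply: eq_bigr => c _.
  by rewrite /T; case: ifP => _; [rewrite ev2_tmap2 | rewrite ev2_nil].
apply: in_tensor_flatten => t /mapP [b _ ->]; apply: in_tensor_flatten => t' /mapP [c _ ->].
rewrite /T; case: ifP => [/andP [sb sc]|_]; last exact: in_tensor_nil.
case: (eqVneq (dadd b c) g) => [e|ne]; last first.
  by apply: (@in_tensor_teq _ _ _ _ [::]); [exact: Dgrad ha ne | exact: in_tensor_nil].
apply: tensor_FDB => [h hh|e' he'].
  rewrite big_map /=; exact: (X_ok ha La sb e hh).
rewrite big_map /=; exact: (Y_ok ha La sb e sc he').
Qed.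

Lemma PP_scale c x : PP x -> PP (c *: x).
Proof. by move=> hx; rewrite -[c *: x]addr0; apply: span_lin => //; exact: span0. Qed.

Lemma Dm_tensor a : PP a -> in_tensor PP (Dm a).
Proof.
move=> [s [hs ->]].
apply: (@in_tensor_teq _ _ _ _ (flatten [seq tscale y.1 (Dm y.2) | y <- s])).
  apply: teq2I => f g hf hg; rewrite ev2_flatten big_map.
  have := span_eval s (EVm_lin hf hg) => /= ->.
  by apply: eq_bigr => y _; rewrite ev2_tscale.
apply: in_tensor_flatten => t /mapP [y hy ->]; apply: in_tensor_scale; first exact: PP_scale.
exact: Dm_tensor_ss (hs y hy).
Qed.


Lemma p_ss a : PP a -> p a = a.
Proof.
move=> [s [hs ->]]; rewrite (linA_sum p_lin); apply: eq_big_seq => y hy.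
by rewrite (linAZ p_lin); have [g [hg _ sg _]] := hs y hy; rewrite (p_homog hg) sg.
Qed.

Lemma Dm_counit a : PP a ->
  \sum_(y <- Dm a) eps y.1 *: y.2 = a /\ \sum_(y <- Dm a) eps y.2 *: y.1 = a.
Proof.
move=> ha; have [h1 h2] := Dcounit a; rewrite /Dm /Delta_mu /tmap2 !big_map /=.
split.
- rewrite -[RHS](p_ss ha) -[in RHS]h1 (linA_sum p_lin); apply: eq_bigr => y _.
  by rewrite (linAZ p_lin) -/p eps_p.
- rewrite -[RHS](p_ss ha) -[in RHS]h2 (linA_sum p_lin); apply: eq_bigr => y _.
  by rewrite (linAZ p_lin) -/p eps_p.
Qed.

Lemma Dm_lin c a b : teq2 (Dm (c *: a + b)) (tscale c (Dm a) ++ Dm b).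
Proof.
apply: teq2I => f g hf hg; rewrite ev2_cat ev2_tscale //; exact: (EVm_lin hf hg c a b).
Qed.

Lemma Dm_p f g x : lin f -> lin g -> ev2 f g (Dm (p x)) = ev2 f g (Dm x).
Proof.
move=> hf hg; pose M := fun y => ev2 f g (Dm y); have lM : lin M := EVm_lin hf hg.
change (M (p x) = M x).
have uS := undup_uniq (supp x).
have sS : {subset supp x <= undup (supp x)} by move=> h; rewrite mem_undup.
rewrite (pS uS sS) [in RHS](dec_S uS sS) !(lin_sum lM); apply: eq_bigr => b _.
case: ifP => sb //; rewrite (lin0 lM); apply/esym.
rewrite /M ev2_Dm EVp_exp // big1 // => c _; apply: big1 => d _.
case: ifP => // /andP [sc sd]; apply: Dgrad0 => //; first exact: pi_id.
by apply: (contraFneq _ sb) => <-; exact: slope_add.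
Qed.

Lemma Dm_coass a : teq3 (comul_l Dm (Dm a)) (comul_r Dm (Dm a)).
Proof.
move=> F G H hF hG hH; rewrite ev3_lg ev3_rg.
have E : Dm a = tmap2 p p (D a) by [].
rewrite E /tmap2 !big_map /=.
under eq_bigr => x _ do rewrite Dm_p // ev2_Dm.
under [RHS]eq_bigr => x _ do rewrite Dm_p // ev2_Dm.
by apply: coass; apply: lin_comp => //; exact: p_lin.
Qed.

Lemma lin_sumf (I : Type) (r : seq I) (F : I -> A -> k) :
  (forall i, lin (F i)) -> lin (fun x => \sum_(i <- r) F i x).
Proof. by move=> h c x y; rewrite mulr_sumr -big_split; apply: eq_bigr => i _; exact: h. Qed.

Lemma bilin_span (P : A -> Prop) (F1 F2 : A -> A -> k) :
  (forall b, lin (fun a => F1 a b)) -> (forall a, lin (F1 a)) ->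
  (forall b, lin (fun a => F2 a b)) -> (forall a, lin (F2 a)) ->
  (forall a b, P a -> P b -> F1 a b = F2 a b) ->
  forall a b, Defs.span P a -> Defs.span P b -> F1 a b = F2 a b.
Proof.
move=> l1 r1 l2 r2 h a b [s1 [h1 ->]] [s2 [h2 ->]].
set B := \sum_(z <- s2) z.1 *: z.2.
have E1 := span_eval s1 (l1 B); have E2 := span_eval s1 (l2 B); simpl in E1, E2.
rewrite E1 E2; apply: eq_big_seq => y hy; congr (_ * _).
rewrite /B (span_eval s2 (r1 _)) (span_eval s2 (r2 _)); apply: eq_big_seq => z hz.
by congr (_ * _); apply: h; [exact: h1 | exact: h2].
Qed.

Lemma Dm_mul_ss f g a b : lin f -> lin g ->
  semistable Gam pi D mu a -> semistable Gam pi D mu b ->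
  ev2 f g (Dm (a * b)) = ev2 f g (tmul (Dm a) (Dm b)).
Proof.
move=> hf hg [g0 [ha Gg sg La]] [h0 [hb Gh sh Lb]].
have lf := lin_comp hf p_lin; have lg := lin_comp hg p_lin.
set S := SS (comps (D a ++ D b)).
have uS : uniq S by exact: SS_uniq.
have cov : forall y, y \in D a ++ D b -> {subset supp y.1 <= S} /\ {subset supp y.2 <= S}.
  by move=> y hy; split; apply: SS_cover; [exact: comps1 | exact: comps2].
have ER : ev2 f g (tmul (Dm a) (Dm b)) = \sum_(y <- D a) \sum_(z <- D b)
   f (prodQ (fun b1 b2 => in_slope mu b1 && in_slope mu b2) S y.1 z.1) *
   g (prodQ (fun b1 b2 => in_slope mu b1 && in_slope mu b2) S y.2 z.2).
  rewrite ev2_tmul /Dm /Delta_mu /tmap2 big_map; apply: eq_big_seq => y hy.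
  rewrite big_map; apply: eq_big_seq => z hz /=.
  have [c1 c2] : {subset supp y.1 <= S} /\ {subset supp y.2 <= S} by apply: cov; rewrite mem_cat hy.
  have [d1 d2] : {subset supp z.1 <= S} /\ {subset supp z.2 <= S} by apply: cov; rewrite mem_cat hz orbT.
  by rewrite -/p (pp_mul uS c1 d1) (pp_mul uS c2 d2).
have EL : ev2 f g (Dm (a * b)) = \sum_(y <- D a) \sum_(z <- D b)
   f (prodQ (fun b1 b2 => in_slope mu (dadd b1 b2)) S y.1 z.1) *
   g (prodQ (fun b1 b2 => in_slope mu (dadd b1 b2)) S y.2 z.2).
  rewrite ev2_Dm /EV (teq2E (Dmul a b) lf lg) ev2_tmul; apply: eq_big_seq => y hy.
  apply: eq_big_seq => z hz /=.
  have [c1 c2] : {subset supp y.1 <= S} /\ {subset supp y.2 <= S} by apply: cov; rewrite mem_cat hy.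
  have [d1 d2] : {subset supp z.1 <= S} /\ {subset supp z.2 <= S} by apply: cov; rewrite mem_cat hz orbT.
  by rewrite (p_mul uS c1 d1) (p_mul uS c2 d2).
rewrite EL ER !QUAD //.
apply: eq_bigr => b1 _; apply: eq_bigr => b2 _; apply: eq_bigr => c1 _; apply: eq_bigr => c2 _ /=.
case: (eqVneq (Tq f g (D a) (D b) b1 b2 c1 c2) 0) => [->|nT]; first by rewrite !if_same.
have L1 : Gam_le Gam mu b1.
  case: (pselect (Gam_le Gam mu b1)) => // n1; exfalso; move/eqP: nT; apply.
  apply: Tva => //; exact: Lok_teq La n1 c1.
have e1 : dadd b1 c1 = g0.
  case: (eqVneq (dadd b1 c1) g0) => // ne; exfalso; move/eqP: nT; apply.
  apply: Tva => //; exact: Dgrad ha ne.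
have L2 : Gam_le Gam mu b2.
  case: (pselect (Gam_le Gam mu b2)) => // n2; exfalso; move/eqP: nT; apply.
  apply: Tvb => //; exact: Lok_teq Lb n2 c2.
have e2 : dadd b2 c2 = h0.
  case: (eqVneq (dadd b2 c2) h0) => // ne; exfalso; move/eqP: nT; apply.
  apply: Tvb => //; exact: Dgrad hb ne.
move/Gam_leP: L1 => [G1 LE1]; move/Gam_leP: L2 => [G2 LE2].
have -> : (in_slope mu (dadd b1 b2) && in_slope mu (dadd c1 c2)) =
   ((in_slope mu b1 && in_slope mu b2) && (in_slope mu c1 && in_slope mu c2)); last by [].
apply/idP/idP => [/andP [s12 _]|/andP [/andP [s1 s2] /andP [t1 t2]]]; last by rewrite !slope_add.
have [s1 s2] := split_slope G1 G2 LE1 LE2 s12.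
have t1 : in_slope mu c1 by apply: (@slope_sub b1); rewrite ?e1.
have t2 : in_slope mu c2 by apply: (@slope_sub b2); rewrite ?e2.
by rewrite s1 s2 t1 t2.
Qed.

Lemma ev2_tmul_l f g (t t' : seq (A * A)) :
  ev2 f g (tmul t t') = \sum_(z <- t') ev2 (fun x => f (x * z.1)) (fun x => g (x * z.2)) t.
Proof. by rewrite ev2_tmul sum_exchange. Qed.
Lemma ev2_tmul_r f g (t t' : seq (A * A)) :
  ev2 f g (tmul t t') = \sum_(y <- t) ev2 (fun x => f (y.1 * x)) (fun x => g (y.2 * x)) t'.
Proof. by rewrite ev2_tmul. Qed.

Lemma Dm_mul a b : PP a -> PP b -> teq2 (Dm (a * b)) (tmul (Dm a) (Dm b)).
Proof.
move=> ha hb; apply: teq2I => f g hf hg.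
apply: (@bilin_span (semistable Gam pi D mu) (fun a b => ev2 f g (Dm (a * b)))
   (fun a b => ev2 f g (tmul (Dm a) (Dm b))) _ _ _ _ _ a b ha hb).
all: first [ by move=> x y hx hy; exact: Dm_mul_ss
  | by move=> y /=; exact: (lin_mulr y (EVm_lin hf hg))
  | by move=> x /=; exact: (lin_mull x (EVm_lin hf hg))
  | by move=> y /=; under eq_fun => x do rewrite ev2_tmul_l;
       apply: lin_sumf => z; exact: EVm_lin (lin_mulr _ hf) (lin_mulr _ hg)
  | by move=> x /=; under eq_fun => y do rewrite ev2_tmul_r;
       apply: lin_sumf => z; exact: EVm_lin (lin_mull _ hf) (lin_mull _ hg) ].
Qed.

Lemma Dm1 : teq2 (Dm 1) [:: (1, 1)].
Proof.
apply: teq2I => f g hf hg; rewrite ev2_Dm /EV (teq2E D1 (lin_comp hf p_lin) (lin_comp hg p_lin)).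
by rewrite /ev2 !big_seq1 /= p1.
Qed.

Lemma main_mu :
    [/\ (forall a, A_ss Gam pi D mu a -> A_sl Gam pi mu a),
        (forall c a b, A_ss Gam pi D mu a -> A_ss Gam pi D mu b ->
           A_ss Gam pi D mu (c *: a + b)),
        A_ss Gam pi D mu 1 /\
        (forall a b, A_ss Gam pi D mu a -> A_ss Gam pi D mu b ->
           A_ss Gam pi D mu (a * b)),
        (forall a, A_ss Gam pi D mu a ->
           in_tensor (A_ss Gam pi D mu) (Delta_mu pi supp D mu a))
      & bialg_on (A_ss Gam pi D mu) (Delta_mu pi supp D mu) eps].
Proof.
split.
- move=> a; apply: span_mono => x [g [hg Gg sg _]]; by exists g.
- by move=> c a b ha hb; exact: (span_lin c ha hb).
- split; first exact: span_el ss1.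
  by move=> a b; apply: span_mul; exact: ss_mul.
- exact: Dm_tensor.
split.
- by move=> c a b _ _; exact: Dm_lin.
- by move=> a _; exact: Dm_coass.
- by move=> a; exact: Dm_counit.
- split; [by move=> a b; exact: Dm_mul | exact: Dm1].
- split; first by move=> c a b _ _; exact: eps_lin.
  by split; [move=> a b _ _; exact: eps_mul | exact: eps1].
Qed.

End Main.

Unset Implicit Arguments.
Set Strict Implicit.

Theorem proposition2p2 (R : realType) (k : fieldType) (A : algType k)
    (Gam : R * R -> Prop) (pi : R * R -> A -> A) (supp : A -> seq (R * R))
    (D : A -> seq (A * A)) (eps : A -> k) :
  graded_conn_bialg Gam pi supp D eps ->
  forall mu : option R,
    [/\ (* A_[mu] is a subalgebra of A_mu *)
        (forall a, A_ss Gam pi D mu a -> A_sl Gam pi mu a),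
        (forall c a b, A_ss Gam pi D mu a -> A_ss Gam pi D mu b ->
           A_ss Gam pi D mu (c *: a + b)),
        A_ss Gam pi D mu 1 /\
        (forall a b, A_ss Gam pi D mu a -> A_ss Gam pi D mu b ->
           A_ss Gam pi D mu (a * b)),
        (* Delta_mu(A_[mu]) lies in A_[mu] (x) A_[mu] *)
        (forall a, A_ss Gam pi D mu a ->
           in_tensor (A_ss Gam pi D mu) (Delta_mu pi supp D mu a))
      & (* (A_[mu], Delta_mu) is a bialgebra *)
        bialg_on (A_ss Gam pi D mu) (Delta_mu pi supp D mu) eps].
Proof. by move=> HA mu; exact: main_mu. Qed.
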